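(* For $1\le j,k\le N$, $m,n\in\mathbb Z\setminus\{0\}$ and each choice of signs, the bosons $\mathcal E^{\pm j}_m$ satisfy \begin{align*} [\mathcal E^{\pm j}_m,\mathcal E^{\pm j}_n]&=\delta_{m+n,0}\,\frac{[cm]_q[\eta m]_q[2(\eta+1)m]_q}{m(q-q^{-1})^2[m]_q^3[2\eta m]_q[(\eta+1)m]_q}\,\frac{1-p^m}{1-p^{*m}}\,q^{-cm},\\ [\mathcal E^{\pm j}_m,\mathcal E^{\mp j}_n]&=\mp\delta_{m+n,0}\,\frac{q^{\pm jm}[cm]_q[\eta m]_q}{m[m]_q^3(q-q^{-1})^2[2\eta m]_q}\,\frac{1-p^m}{1-p^{*m}}\,q^{-cm}\left(q^{\pm(\eta+j)m}[m]_q\pm q^{\mp(j-1)m}[\eta m]_+\right),\\ [\mathcal E^{\pm j}_m,\mathcal E^{\pm k}_n]&=\mp\,\mathrm{sgn}(k-j)\,\delta_{m+n,0}\,q^{\mp(\mathrm{sgn}(k-j)\eta+k-j)m}\,\frac{[cm]_q[\eta m]_q}{m(q-q^{-1})[m]_q^2[2\eta m]_q}\,\frac{1-p^m}{1-p^{*m}}\,q^{-cm}\quad(j\neq k),\\ [\mathcal E^{\pm j}_m,\mathcal E^{\mp k}_n]&=\mp\,\delta_{m+n,0}\,q^{\pm(\eta+j+k)m}\,\frac{[cm]_q[\eta m]_q}{m(q-q^{-1})[m]_q^2[2\eta m]_q}\,\frac{1-p^m}{1-p^{*m}}\,q^{-cm}\quad(j\neq k), \end{align*} where $\mathrm{sgn}(l-j)=+$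 if $l>j$ and $-$ if $l<j$.
   Context: Fix an integer $N\ge 2$, complex numbers $q,p$ with $0<|q|<1$, $|p|<1$, and a central element $c$. Put $p^*=pq^{-2c}$, $[n]_q=\frac{q^n-q^{-n}}{q-q^{-1}}$, $[n]_+=\frac{q^n+q^{-n}}{q-q^{-1}}$ (also for non-integer $n$). Let $(b_{ij})_{i,j=1}^N$ be the symmetrized Cartan matrix of type $B_N$: $b_{ii}=2$ for $1\le i\le N-1$, $b_{NN}=1$, $b_{i,i+1}=b_{i+1,i}=-1$ for $1\le i\le N-1$, all other entries $0$. The elliptic bosons $\alpha_{j,m}$ ($1\le j\le N$, $m\in\mathbb Z\setminus\{0\}$) satisfy $[\alpha_{i,m},\alpha_{j,n}]=\delta_{m+n,0}\frac{[b_{ij}m]_q[cm]_q}{m}\frac{1-p^m}{1-p^{*m}}q^{-cm}$. Set $\eta=-(2N-1)/2$, $C_m=\frac{[\eta m]_q}{[m]_q^2[2\eta m]_q}$, and for $1\le j\le N$, $m\ne0$, $$\mathcal E^{\pm j}_m=q^{\pm jm}C_m\Big(q^{\pm\eta m}\sum_{k=1}^{j-1}[km]_q\alpha_{k,m}\pm\sum_{k=j}^{N}[(\eta+k)m]_+\alpha_{k,m}\Big).$$ *)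

(* Defs.v *)
From HB Require Import structures.
From mathcomp Require Import all_boot all_order all_algebra.
Set Implicit Arguments. Unset Strict Implicit. Unset Printing Implicit Defensive.
Import Order.TTheory GRing.Theory Num.Theory.
Local Open Scope ring_scope.

(* Conventions.
   - The base field is an arbitrary numClosedFieldType C (e.g. the complex numbers).
   - s is a fixed square root of q (s ^+ 2 = q), so that half-integral powers of q
     are integral powers of s:  q^(h/2) := s ^ h  (h : int).
   - Qc stands for q^c (the value of q raised to the central element c); all
     quantities depend on c only through q^(c m) = Qc ^ m.
   - Bosons are indexed by k : nat with 1 <= k <= N and m : int, m <> 0, and live
     in an algebra A over C; scalars act through  x%:A. *)

Definition comm (A : nzRingType) (x y : A) : A := x * y - y * x.

(* [x]_q written through X = q^x :  (X - X^-1)/(q - q^-1). *)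
Definition qbr (C : fieldType) (q X : C) : C := (X - X^-1) / (q - q^-1).
(* [x]_+ written through X = q^x :  (X + X^-1)/(q - q^-1). *)
Definition qbrp (C : fieldType) (q X : C) : C := (X + X^-1) / (q - q^-1).

(* [h/2]_q and [h/2]_+ for h : int, in terms of s with s^2 = q. *)
Definition qh (C : fieldType) (s : C) (h : int) : C := qbr (s ^+ 2) (s ^ h).
Definition qhp (C : fieldType) (s : C) (h : int) : C := qbrp (s ^+ 2) (s ^ h).

(* 2*eta = -(2N-1) *)
Definition eta2 (N : nat) : int := - (2 * N%:Z - 1).

(* Symmetrized Cartan matrix of type B_N (indices 1..N). *)
Definition bB (N i j : nat) : int :=
  if i == j then (if i == N then 1 else 2)
  else if (i.+1 == j) || (j.+1 == i) then -1 else 0.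

Definition sgnb (b : bool) : int := if b then 1 else -1.

(* The common elliptic factor  [cm]_q / m * (1-p^m)/(1-p*^m) * q^(-cm),
   with p* = p q^(-2c). *)
Definition ellF (C : fieldType) (q p Qc : C) (m : int) : C :=
  qbr q (Qc ^ m) / m%:~R * ((1 - p ^ m) / (1 - (p * Qc ^ (-2)) ^ m)) * Qc ^ (- m).

(* C_m = [eta m]_q / ([m]_q^2 [2 eta m]_q) *)
Definition Cm (C : fieldType) (N : nat) (s : C) (m : int) : C :=
  qh s (eta2 N * m) / (qh s (2 * m) ^+ 2 * qh s (2 * eta2 N * m)).

(* E^{eps j}_m, eps = sgnb b:
   q^{eps j m} C_m ( q^{eps eta m} sum_{k=1}^{j-1} [k m]_q alpha_{k,m}
                     + eps sum_{k=j}^{N} [(eta+k) m]_+ alpha_{k,m} ) *)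
Definition Ebos (C : fieldType) (A : algType C) (N : nat) (s : C)
    (alpha : nat -> int -> A) (b : bool) (j : nat) (m : int) : A :=
  (s ^ (2 * sgnb b * j%:Z * m) * Cm N s m) *:
    ((s ^ (sgnb b * eta2 N * m)) *: (\sum_(1 <= k < j) qh s (2 * k%:Z * m) *: alpha k m)
     + (sgnb b)%:~R *: (\sum_(j <= k < N.+1) qhp s ((eta2 N + 2 * k%:Z) * m) *: alpha k m)).

(* Main.v *)
Require Import Defs.
From HB Require Import structures.
From mathcomp Require Import all_boot all_order all_algebra.
From mathcomp Require Import ring zify.
Import Order.TTheory GRing.Theory Num.Theory.
Set Implicit Arguments. Unset Strict Implicit. Unset Printing Implicit Defensive.
Local Open Scope ring_scope.

Lemma comm_sum (C : fieldType) (A : algType C) (r1 r2 : seq nat) (a b : nat -> C)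
   (X Y : nat -> A) (c : nat -> nat -> C) :
  (forall i j, i \in r1 -> j \in r2 -> comm (X i) (Y j) = (c i j)%:A) ->
  comm (\sum_(i <- r1) a i *: X i) (\sum_(j <- r2) b j *: Y j) =
  (\sum_(i <- r1) \sum_(j <- r2) a i * b j * c i j)%:A.
Proof.
move=> H.
have -> : comm (\sum_(i <- r1) a i *: X i) (\sum_(j <- r2) b j *: Y j) =
   \sum_(i <- r1) \sum_(j <- r2) (a i * b j) *: comm (X i) (Y j).
  rewrite /comm mulr_suml mulr_sumr -sumrB; apply: eq_bigr => i _.
  rewrite mulr_sumr mulr_suml -sumrB; apply: eq_bigr => j _.
  rewrite -scalerAl -scalerAr -scalerAl -scalerAr !scalerA scalerBr (mulrC (b j)).
  by [].
rewrite scaler_suml; apply: eq_big_seq => i hi.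
rewrite scaler_suml; apply: eq_big_seq => j hj.
by rewrite H // scalerA.
Qed.

Definition coef (C : fieldType) N (s : C) (b : bool) (j : nat) (m : int) (k : nat) : C :=
  s ^ (2 * sgnb b * j%:Z * m) * Cm N s m *
  (if (k < j)%N then s ^ (sgnb b * eta2 N * m) * qh s (2 * k%:Z * m)
   else (sgnb b)%:~R * qhp s ((eta2 N + 2 * k%:Z) * m)).

Lemma Ebos_sum (C : fieldType) (A : algType C) N (s : C) (alpha : nat -> int -> A) b j m :
  (1 <= j <= N.+1)%N ->
  Ebos N s alpha b j m = \sum_(1 <= k < N.+1) coef N s b j m k *: alpha k m.
Proof.
case/andP=> h1 h2.
rewrite /Ebos [RHS](@big_cat_nat _ _ _ j) // scalerDr !scaler_sumr.
congr (_ + _); apply: eq_big_nat => k /andP[hk1 hk2].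
  by rewrite /coef hk2 !scalerA !mulrA.
by rewrite /coef ltnNge hk1 /= !scalerA !mulrA.
Qed.

Lemma sum_ind (C : fieldType) (x a b : nat) (f : nat -> C) :
  \sum_(a <= l < b) (l == x)%:R * f l = if (a <= x < b)%N then f x else 0.
Proof.
elim: b => [|b IH]; first by rewrite big_geq //; case: ifP => //; lia.
case: (leqP a b) => hab; last first.
  rewrite big_geq //; case: ifP => //; lia.
rewrite big_nat_recr //= IH.
have [->|hxb] := eqVneq x b.
  rewrite /= mulr1n mul1r; case: ifP => h; case: ifP => h'; rewrite ?add0r //; lia.
rewrite /= mulr0n mul0r addr0; case: ifP => h; case: ifP => h' //; lia.
Qed.

Lemma qbrN (C : fieldType) (q X : C) : qbr q X^-1 = - qbr q X.
Proof. by rewrite /qbr invrK -mulNr opprB. Qed.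

Lemma inner (C : fieldType) N (q : C) (m : int) (g : nat -> C) k : q != 0 ->
  (1 <= k <= N)%N ->
  \sum_(1 <= l < N.+1) g l * qbr q (q ^ (bB N k l * m)) =
  qbr q (q ^ ((if k == N then 1 else 2) * m)) * g k
   - qbr q (q ^ m) * ((if (1 < k)%N then g k.-1 else 0) + (if (k < N)%N then g k.+1 else 0)).
Proof.
move=> q0 /andP[hk1 hkN].
have pt : forall l, (1 <= l)%N -> g l * qbr q (q ^ (bB N k l * m)) =
   (l == k)%:R * (qbr q (q ^ ((if k == N then 1 else 2) * m)) * g l)
   - ((l == k.-1)%:R * (qbr q (q ^ m) * g l) + (l == k.+1)%:R * (qbr q (q ^ m) * g l)).
  move=> l hl; rewrite /bB.
  have [<-|nkl] := eqVneq k l.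
    rewrite (_ : (k == k.-1) = false); last by apply/eqP; lia.
    rewrite (_ : (k == k.+1) = false); last by apply/eqP; lia.
    by rewrite /= mulr1n mulr0n !mul0r mul1r addr0 subr0 mulrC.
  rewrite /= mulr0n mul0r sub0r.
  case: ifP => h.
    rewrite mulN1r -exprz_inv -expfV qbrN.
    case/orP: h => /eqP h.
      rewrite (_ : (l == k.-1) = false); last by apply/eqP; lia.
      rewrite -h eqxx /= mulr0n mulr1n mul0r add0r mul1r; ring.
    rewrite (_ : (l == k.+1) = false); last by apply/eqP; lia.
    rewrite (_ : (l == k.-1) = true); last by apply/eqP; lia.
    rewrite /= mulr0n mulr1n mul1r mul0r addr0; ring.
  rewrite (_ : (l == k.+1) = false); last by apply/eqP => e; rewrite e eqxx in h.
  rewrite (_ : (l == k.-1) = false); last first.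
    apply/eqP => e; move/negbT: h; rewrite negb_or e; case/andP=> _ /eqP; lia.
  by rewrite /= mulr0n !mul0r /qbr expr0z invr1 subrr !mul0r mulr0 addr0 oppr0.
rewrite (eq_big_nat _ _ (F2 := fun l => (l == k)%:R * (qbr q (q ^ ((if k == N then 1 else 2) * m)) * g l)
   - ((l == k.-1)%:R * (qbr q (q ^ m) * g l) + (l == k.+1)%:R * (qbr q (q ^ m) * g l)))); last first.
  by move=> l /andP[hl _]; exact: pt.
rewrite sumrB big_split /= !sum_ind.
rewrite (_ : (1 <= k < N.+1)%N = true); last by apply/idP; lia.
rewrite (_ : (1 <= k.-1 < N.+1)%N = (1 < k)%N); last by apply/idP/idP; lia.
rewrite (_ : (1 <= k.+1 < N.+1)%N = (k < N)%N); last by apply/idP/idP; lia.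
case: (1 < k)%N; case: (k < N)%N; ring.
Qed.

Section Pw.
Variable C : fieldType.
Variables (s : C) (m : int).
Hypothesis s0 : s != 0.
Definition pw (e : int) := s ^ (e * m).
Lemma pwE e : s ^ (e * m) = pw e. Proof. by []. Qed.
Lemma pwNE e : s ^ (e * - m) = pw (- e). Proof. by rewrite /pw mulrN mulNr. Qed.
Lemma pwNE2 e : s ^ (- (e * m)) = pw (- e). Proof. by rewrite /pw mulNr. Qed.
Lemma pwq e : (s ^+ 2) ^ (e * m) = pw (2 * e).
Proof. by rewrite /pw exprnP exprz_exp mulrA. Qed.
Lemma pwqN e : (s ^+ 2) ^ (e * - m) = pw (- (2 * e)).
Proof. by rewrite mulrN -mulNr pwq mulrN. Qed.
Lemma pwD a b : pw (a + b) = pw a * pw b.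
Proof. by rewrite /pw mulrDl expfzDr. Qed.
Lemma pwN a : pw (- a) = (pw a)^-1.
Proof. by rewrite /pw mulNr -exprz_inv expfV. Qed.
Lemma pwMDr a b c : pw (a * (b + c)) = pw (a * b) * pw (a * c).
Proof. by rewrite mulrDr pwD. Qed.
Lemma pwMDl a b c : pw ((a + b) * c) = pw (a * c) * pw (b * c).
Proof. by rewrite mulrDl pwD. Qed.
Lemma pwMNr a b : pw (a * - b) = (pw (a * b))^-1.
Proof. by rewrite mulrN pwN. Qed.
Lemma pwMNl a b : pw (- a * b) = (pw (a * b))^-1.
Proof. by rewrite mulNr pwN. Qed.
Lemma pwMA a b c : pw (a * (b * c)) = pw (a * b * c).
Proof. by rewrite mulrA. Qed.
Lemma pw1M a : pw (1 * a) = pw a. Proof. by rewrite mul1r. Qed.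
Lemma pw1 : pw 1 = s ^ m. Proof. by rewrite /pw mul1r. Qed.
Lemma pwq1 : (s ^+ 2) ^ m = pw 2.
Proof. by rewrite /pw exprnP exprz_exp. Qed.
Lemma pw2 : pw 2 = pw 1 ^+ 2.
Proof. by rewrite /pw mul1r exprnP exprz_exp mulrC. Qed.
Lemma pw2M a : pw (2 * a) = pw a ^+ 2.
Proof. by rewrite /pw -mulrA exprnP exprz_exp mulrC. Qed.
Lemma pw2MM a b : pw (2 * a * b) = pw (a * b) ^+ 2.
Proof. by rewrite -mulrA pw2M. Qed.
Lemma pw1MM a b : pw (1 * a * b) = pw (a * b).
Proof. by rewrite mul1r. Qed.
Lemma pw0 : pw 0 = 1.
Proof. by rewrite /pw mul0r. Qed.
Lemma pw_neq0 e : pw e != 0.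
Proof. by rewrite /pw expfz_neq0. Qed.
End Pw.

Ltac pwfold s m := rewrite ?(@pwq _ s m) ?(@pwqN _ s m) ?(@pwq1 _ s m) ?(@pwNE _ s m) ?(@pwNE2 _ s m) ?(@pwE _ s m).
Ltac pwnorm s m s0 :=
  repeat first [ rewrite (@pw1M _ s m) | rewrite (@pw1MM _ s m) | rewrite (@pwD _ s m s0) | rewrite (@pwN _ s m)
   | rewrite (@pwMDr _ s m s0) | rewrite (@pwMDl _ s m s0) | rewrite (@pwMNr _ s m) | rewrite (@pwMNl _ s m)
   | rewrite (@pw2MM _ s m) | rewrite (@pw2M _ s m) | rewrite (@pwMA _ s m) | rewrite (@pw2 _ s m) | rewrite (@pw0 _ s m) ].

Definition hh (C : fieldType) (q : C) (m : int) (g : nat -> C) (k : nat) : C :=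
  qbr q (q ^ (2 * m)) * g k - qbr q (q ^ m) * (g k.-1 + g k.+1).

Lemma inner_hh (C : fieldType) N (q : C) m (g : nat -> C) k : q != 0 ->
  (1 <= k <= N)%N -> g 0%N = 0 ->
  qbr q (q ^ (1 * m)) * g N = qbr q (q ^ (2 * m)) * g N - qbr q (q ^ m) * g N.+1 ->
  \sum_(1 <= l < N.+1) g l * qbr q (q ^ (bB N k l * m)) = hh q m g k.
Proof.
move=> q0 hk g0 gN; rewrite inner //.
have -> : (if (1 < k)%N then g k.-1 else 0) = g k.-1.
  by case: k hk => [|[|k]] //= _; rewrite g0.
rewrite /hh; have [ekN|nkN] := eqVneq k N.
  rewrite ekN ltnn gN; ring.
rewrite (_ : (k < N)%N = true); last by apply/idP; move/eqP: nkN; lia.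
done.
Qed.

Lemma sum_hh (C : fieldType) N (c h : nat -> C) j' : (1 <= j' <= N)%N -> c 0%N = 0 ->
  (forall k, (1 <= k)%N -> k != j'.-1 -> k != j' -> h k = 0) ->
  \sum_(1 <= k < N.+1) c k * h k = c j'.-1 * h j'.-1 + c j' * h j'.
Proof.
move=> hj c0 hz.
rewrite (eq_big_nat _ _ (F2 := fun k => (k == j'.-1)%:R * (c k * h k) + (k == j')%:R * (c k * h k))); last first.
  move=> k /andP[hk _].
  have [->|n1] := eqVneq k j'.-1.
    rewrite (_ : (j'.-1 == j') = false); last by apply/eqP; lia.
    by rewrite /= mulr1n mulr0n mul1r mul0r addr0.
  have [->|n2] := eqVneq k j'.
    by rewrite /= mulr1n mulr0n mul1r mul0r add0r.
  by rewrite /= mulr0n !mul0r addr0 hz // mulr0.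
rewrite big_split /= !sum_ind.
rewrite (_ : (1 <= j' < N.+1)%N = true); last by apply/idP; lia.
case: ifP => // hh0; rewrite (_ : j'.-1 = 0%N); last by lia.
by rewrite c0 mul0r.
Qed.

Ltac hammer0 s m s0 := rewrite /coef /qh /qhp /qbr /qbrp; pwfold s m;
  rewrite /eta2 /sgnb ?mulr1z ?mulrN1z ?mulr1 ?mul1r ?mulrN1 ?mulN1r ?mulrN ?mulNr ?opprK; pwnorm s m s0.

Lemma coefz0 (C : fieldType) N (s : C) b j m : (1 <= j)%N -> coef N s b j m 0%N = 0.
Proof.
by move=> hj; rewrite /coef hj /qh /qbr mulr0 mul0r expr0z invr1 subrr !mul0r !mulr0.
Qed.

Section NC.
Variable C : numClosedFieldType.
Variables (s : C) (m : int).
Hypothesis s0 : s != 0.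
Hypothesis hs1 : `|s| < 1.
Hypothesis hm : m != 0.

Lemma xn_neq1 (n : nat) : (0 < n)%N -> s ^+ n != 1.
Proof.
move=> hn; apply/eqP => /(congr1 (fun x : C => `|x|)); rewrite normrX normr1 => h.
have := exprn_ilt1 n (normr_ge0 s) hs1; rewrite h ltxx.
by case: n hn {h}.
Qed.

Lemma xz_neq1 (k : int) : k != 0 -> s ^ k != 1.
Proof.
case: k => [n|n] hk.
  by apply: xn_neq1; case: n hk.
rewrite NegzE -exprnN invr_eq1; exact: xn_neq1.
Qed.


Lemma pw_neq e1 e2 : e1 != e2 -> pw s m e1 != pw s m e2.
Proof.
move=> h; apply/eqP => E.
have : pw s m (e1 - e2) = 1 by rewrite pwD // pwN E mulfV // pw_neq0.
rewrite /pw => /eqP; apply/negP; apply: xz_neq1.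
by rewrite mulf_eq0 negb_or subr_eq0 h hm.
Qed.

Lemma hQ_of : (s * s) ^+ 2 - 1 != 0.
Proof. by rewrite subr_eq0 -expr2 -exprM; apply: xn_neq1. Qed.
End NC.

Ltac side s m s0 hs1 hm hQ :=
  repeat (apply/andP; split);
  try exact: hQ; try (by rewrite pw_neq0); try (by rewrite intr_eq0); try (by rewrite oner_eq0); try done;
  rewrite ?mulNr ?mulrN -?(@pwD _ s m s0) -?(@pw0 _ s m) subr_eq0;
  apply: (@pw_neq _ s m s0 hs1 hm); lia.

Lemma coef_harm (C : fieldType) N (s : C) b j m k : s != 0 -> (s * s) ^+ 2 - 1 != 0 ->
  (1 <= j)%N -> (1 <= k)%N ->
  k != j.-1 -> k != j -> hh (s ^+ 2) m (coef N s b j (- m)) k = 0.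
Proof.
move=> s0 hQ hj hk n1 n2.
case: k hk n1 n2 => [//|i] _ n1 n2.
rewrite /hh /coef /=; move: (Cm N s (- m)) => Cc.
have [lt|gt] : (i.+2 < j)%N \/ (j < i.+1)%N by move/eqP: n1; move/eqP: n2; lia.
  rewrite (_ : (i < j)%N = true); last by apply/idP; lia.
  rewrite (_ : (i.+1 < j)%N = true); last by apply/idP; lia.
  rewrite lt !intS.
  case: b; hammer0 s m s0; field; by rewrite ?pw_neq0 ?s0 ?hQ ?oner_eq0.
rewrite (_ : (i < j)%N = false); last by apply/negbTE; rewrite -leqNgt; lia.
rewrite (_ : (i.+1 < j)%N = false); last by apply/negbTE; rewrite -leqNgt; lia.
rewrite (_ : (i.+2 < j)%N = false); last by apply/negbTE; rewrite -leqNgt; lia.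
rewrite !intS.
case: b; hammer0 s m s0; field; by rewrite ?pw_neq0 ?s0 ?hQ ?oner_eq0.

Qed.

Lemma coef_gN (C : fieldType) N (s : C) b j m : s != 0 -> (s * s) ^+ 2 - 1 != 0 -> (j <= N)%N ->
  qbr (s ^+ 2) ((s ^+ 2) ^ (1 * m)) * coef N s b j (- m) N =
  qbr (s ^+ 2) ((s ^+ 2) ^ (2 * m)) * coef N s b j (- m) N
  - qbr (s ^+ 2) ((s ^+ 2) ^ m) * coef N s b j (- m) N.+1.
Proof.
move=> s0 hQ hj.
rewrite /coef; move: (Cm N s (- m)) => Cc.
rewrite (_ : (N < j)%N = false); last by apply/negbTE; rewrite -leqNgt.
rewrite (_ : (N.+1 < j)%N = false); last by apply/negbTE; rewrite -leqNgt; lia.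
rewrite !intS.
case: b; hammer0 s m s0; field; by rewrite ?pw_neq0 ?s0 ?hQ ?oner_eq0.
Qed.

Lemma comm_main (C : fieldType) (A : algType C) N (q s p Qc : C) (alpha : nat -> int -> A)
   b j b' j' m :
  s != 0 -> (s * s) ^+ 2 - 1 != 0 -> q = s ^+ 2 -> (1 <= j <= N)%N -> (1 <= j' <= N)%N ->
  (forall i l, (1 <= i <= N)%N -> (1 <= l <= N)%N ->
     comm (alpha i m) (alpha l (- m)) = (qbr q (q ^ (bB N i l * m)) * ellF q p Qc m)%:A) ->
  comm (Ebos N s alpha b j m) (Ebos N s alpha b' j' (- m)) =
  ((coef N s b j m j'.-1 * hh q m (coef N s b' j' (- m)) j'.-1
    + coef N s b j m j' * hh q m (coef N s b' j' (- m)) j') * ellF q p Qc m)%:A.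
Proof.
move=> s0 hQ hq hj hj' H.
rewrite !Ebos_sum; [|lia|lia].
rewrite (@comm_sum _ _ _ _ _ _ _ _ (fun i l => qbr q (q ^ (bB N i l * m)) * ellF q p Qc m)); last first.
  by move=> i l; rewrite !mem_index_iota => hi hl; apply: H; lia.
congr (_ %:A).
have q0 : q != 0 by rewrite hq expf_neq0.
rewrite (eq_big_nat _ _ (F2 := fun i => (coef N s b j m i * hh q m (coef N s b' j' (- m)) i) * ellF q p Qc m)); last first.
  move=> i hi.
  have g0 : coef N s b' j' (- m) 0%N = 0 by apply: coefz0; lia.
  have gN := @coef_gN _ N s b' j' m s0 hQ (proj2 (andP hj')).
  rewrite -hq in gN.
  have hi' : (1 <= i <= N)%N by lia.
  rewrite -(inner_hh q0 hi' g0 gN).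
  by rewrite mulr_sumr mulr_suml; apply: eq_bigr => l _; ring.
rewrite -mulr_suml (@sum_hh _ N (coef N s b j m) (hh q m (coef N s b' j' (- m))) j') //; first by apply: coefz0; lia.
move=> k hk n1 n2; rewrite hq; apply: coef_harm => //; lia.
Qed.

Lemma ifT (A : Type) (c : bool) (x y : A) : c -> (if c then x else y) = x.
Proof. by move=> ->. Qed.
Lemma ifF (A : Type) (c : bool) (x y : A) : ~~ c -> (if c then x else y) = y.
Proof. by move/negbTE=> ->. Qed.
Ltac resolve_ifs := repeat match goal with |- context [if ?c then _ else _] =>
  first [ rewrite (_ : c = true); last by apply/idP; lia
        | rewrite (_ : c = false); last by apply/negbTE; lia ] end.

Ltac fin_tac s m s0 hs1 hm hQ :=
  rewrite /hh /coef ?succnK /sgnb; resolve_ifs; rewrite ?intS /Cm; hammer0 s m s0; field;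
  side s m s0 hs1 hm hQ.

Definition Fq (C : fieldType) (p Qc : C) (m : int) := (1 - p ^ m) / (1 - (p * Qc ^ (-2)) ^ m).

Lemma fin1 (C : numClosedFieldType) N (s p Qc : C) b j m : s != 0 -> `|s| < 1 -> m != 0 -> (2 <= N)%N ->
  (1 <= j <= N)%N ->
  (coef N s b j m j.-1 * hh (s ^+ 2) m (coef N s b j (- m)) j.-1
    + coef N s b j m j * hh (s ^+ 2) m (coef N s b j (- m)) j) * ellF (s ^+ 2) p Qc m
  = 1 * (qbr (s ^+ 2) (Qc ^ m) * qh s (eta2 N * m) * qh s (2 * (eta2 N + 2) * m)
                / (m%:~R * (s ^+ 2 - (s ^+ 2)^-1) ^+ 2 * qh s (2 * m) ^+ 3 * qh s (2 * eta2 N * m)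
                   * qh s ((eta2 N + 2) * m)))
            * ((1 - p ^ m) / (1 - (p * Qc ^ (-2)) ^ m)) * Qc ^ (- m).
Proof.
move=> s0 hs1 hm hN hj; have hQ := hQ_of hs1.
rewrite /ellF; move: (qbr _ (Qc ^ m)) ((1 - p ^ m) / (1 - (p * Qc ^ (-2)) ^ m)) (Qc ^ (- m)) => R F2 Qm.
case: j hj => [//|[|i]] hj.
  rewrite /= coefz0 // mul0r add0r /hh coefz0 // add0r.
  by case: b; fin_tac s m s0 hs1 hm hQ.
by case: b; fin_tac s m s0 hs1 hm hQ.
Qed.

Lemma fin2 (C : numClosedFieldType) N (s p Qc : C) b j m : s != 0 -> `|s| < 1 -> m != 0 -> (2 <= N)%N ->
  (1 <= j <= N)%N ->
  (coef N s b j m j.-1 * hh (s ^+ 2) m (coef N s (~~ b) j (- m)) j.-1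
    + coef N s b j m j * hh (s ^+ 2) m (coef N s (~~ b) j (- m)) j) * ellF (s ^+ 2) p Qc m
  = (- (sgnb b)%:~R * 1 * (s ^ (2 * sgnb b * j%:Z * m) * qbr (s ^+ 2) (Qc ^ m) * qh s (eta2 N * m)
                / (m%:~R * qh s (2 * m) ^+ 3 * (s ^+ 2 - (s ^+ 2)^-1) * qh s (2 * eta2 N * m)))
            * ((1 - p ^ m) / (1 - (p * Qc ^ (-2)) ^ m)) * Qc ^ (- m)
            * (s ^ (sgnb b * (eta2 N + 2 * j%:Z) * m) * qh s (2 * m)
               + (sgnb b)%:~R * s ^ (- (sgnb b * 2 * (j%:Z - 1) * m)) * qhp s (eta2 N * m))).
Proof.
move=> s0 hs1 hm hN hj; have hQ := hQ_of hs1.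
rewrite /ellF; move: (qbr _ (Qc ^ m)) ((1 - p ^ m) / (1 - (p * Qc ^ (-2)) ^ m)) (Qc ^ (- m)) => R F2 Qm.
case: j hj => [//|[|i]] hj.
  rewrite /= coefz0 // mul0r add0r /hh coefz0 // add0r.
  by case: b; fin_tac s m s0 hs1 hm hQ.
by case: b; fin_tac s m s0 hs1 hm hQ.
Qed.

Lemma fin3 (C : numClosedFieldType) N (s p Qc : C) b j k m : s != 0 -> `|s| < 1 -> m != 0 -> (2 <= N)%N ->
  (1 <= j <= N)%N -> (1 <= k <= N)%N -> j != k ->
  (coef N s b j m k.-1 * hh (s ^+ 2) m (coef N s b k (- m)) k.-1
    + coef N s b j m k * hh (s ^+ 2) m (coef N s b k (- m)) k) * ellF (s ^+ 2) p Qc m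
  = (- (sgnb b)%:~R * (sgnb (j < k)%N)%:~R * 1
            * s ^ (- (sgnb b * (sgnb (j < k)%N * eta2 N + 2 * (k%:Z - j%:Z)) * m))
            * (qbr (s ^+ 2) (Qc ^ m) * qh s (eta2 N * m)
                / (m%:~R * (s ^+ 2 - (s ^+ 2)^-1) * qh s (2 * m) ^+ 2 * qh s (2 * eta2 N * m)))
            * ((1 - p ^ m) / (1 - (p * Qc ^ (-2)) ^ m)) * Qc ^ (- m)).
Proof.
move=> s0 hs1 hm hN hj hk hjk; have hQ := hQ_of hs1; have hj1 : (1 <= j)%N by lia.
rewrite /ellF; move: (qbr _ (Qc ^ m)) ((1 - p ^ m) / (1 - (p * Qc ^ (-2)) ^ m)) (Qc ^ (- m)) => R F2 Qm.
case: k hk hjk => [//|[|i]] hk hjk.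
  rewrite /= coefz0 // mul0r add0r /hh coefz0 // add0r.
  have hj2 : (1 < j)%N by move/eqP: hjk; lia.
  by case: b; fin_tac s m s0 hs1 hm hQ.
case: (ltngtP j i.+2) => hji; last by rewrite hji eqxx in hjk.
  by case: b; fin_tac s m s0 hs1 hm hQ.
by case: b; fin_tac s m s0 hs1 hm hQ.
Qed.

Lemma fin4 (C : numClosedFieldType) N (s p Qc : C) b j k m : s != 0 -> `|s| < 1 -> m != 0 -> (2 <= N)%N ->
  (1 <= j <= N)%N -> (1 <= k <= N)%N -> j != k ->
  (coef N s b j m k.-1 * hh (s ^+ 2) m (coef N s (~~ b) k (- m)) k.-1
    + coef N s b j m k * hh (s ^+ 2) m (coef N s (~~ b) k (- m)) k) * ellF (s ^+ 2) p Qc m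
  = (- (sgnb b)%:~R * 1 * s ^ (sgnb b * (eta2 N + 2 * (j%:Z + k%:Z)) * m)
            * (qbr (s ^+ 2) (Qc ^ m) * qh s (eta2 N * m)
                / (m%:~R * (s ^+ 2 - (s ^+ 2)^-1) * qh s (2 * m) ^+ 2 * qh s (2 * eta2 N * m)))
            * ((1 - p ^ m) / (1 - (p * Qc ^ (-2)) ^ m)) * Qc ^ (- m)).
Proof.
move=> s0 hs1 hm hN hj hk hjk; have hQ := hQ_of hs1; have hj1 : (1 <= j)%N by lia.
rewrite /ellF; move: (qbr _ (Qc ^ m)) ((1 - p ^ m) / (1 - (p * Qc ^ (-2)) ^ m)) (Qc ^ (- m)) => R F2 Qm.
case: k hk hjk => [//|[|i]] hk hjk.
  rewrite /= coefz0 // mul0r add0r /hh coefz0 // add0r.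
  have hj2 : (1 < j)%N by move/eqP: hjk; lia.
  by case: b; fin_tac s m s0 hs1 hm hQ.
case: (ltngtP j i.+2) => hji; last by rewrite hji eqxx in hjk.
  by case: b; fin_tac s m s0 hs1 hm hQ.
by case: b; fin_tac s m s0 hs1 hm hQ.
Qed.

Lemma comm_zero (C : fieldType) (A : algType C) N (s : C) (alpha : nat -> int -> A) b j b' j' m n :
  (1 <= j <= N)%N -> (1 <= j' <= N)%N ->
  (forall i l, (1 <= i <= N)%N -> (1 <= l <= N)%N -> comm (alpha i m) (alpha l n) = 0%:A) ->
  comm (Ebos N s alpha b j m) (Ebos N s alpha b' j' n) = 0.
Proof.
move=> hj hj' H.
rewrite !Ebos_sum; [|lia|lia].
rewrite (@comm_sum _ _ _ _ _ _ _ _ (fun _ _ => 0)); last first.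
  by move=> i l; rewrite !mem_index_iota => hi hl; apply: H; lia.
rewrite big1 ?scale0r // => i _; rewrite big1 // => l _; by rewrite mulr0.
Qed.

Theorem proposition2p2
  (C : numClosedFieldType) (A : algType C) (N : nat) (hN : (2 <= N)%N)
  (q s p Qc : C) (hq0 : 0 < `|q|) (hq1 : `|q| < 1) (hp : `|p| < 1)
  (hs : s ^+ 2 = q) (hQc : Qc != 0)
  (alpha : nat -> int -> A)
  (halpha : forall (i j : nat) (m n : int),
      (1 <= i <= N)%N -> (1 <= j <= N)%N -> m != 0 -> n != 0 ->
      comm (alpha i m) (alpha j n) =
        (if m + n == 0 then qbr q (q ^ (bB N i j * m)) * ellF q p Qc m else 0)%:A) :
  forall (b : bool) (j k : nat) (m n : int),
    (1 <= j <= N)%N -> (1 <= k <= N)%N -> m != 0 -> n != 0 ->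
    let eps : C := (sgnb b)%:~R in
    let et := eta2 N in
    let d : C := if m + n == 0 then 1 else 0 in
    let E := Ebos N s alpha in
    (* [E^{±j}_m, E^{±j}_n] *)
    [/\ comm (E b j m) (E b j n) =
          (d * (qbr q (Qc ^ m) * qh s (et * m) * qh s (2 * (et + 2) * m)
                / (m%:~R * (q - q^-1) ^+ 2 * qh s (2 * m) ^+ 3 * qh s (2 * et * m)
                   * qh s ((et + 2) * m)))
            * ((1 - p ^ m) / (1 - (p * Qc ^ (-2)) ^ m)) * Qc ^ (- m))%:A,
        (* [E^{±j}_m, E^{∓j}_n] *)
        comm (E b j m) (E (~~ b) j n) =
          (- eps * d * (s ^ (2 * sgnb b * j%:Z * m) * qbr q (Qc ^ m) * qh s (et * m)
                / (m%:~R * qh s (2 * m) ^+ 3 * (q - q^-1) * qh s (2 * et * m)))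
            * ((1 - p ^ m) / (1 - (p * Qc ^ (-2)) ^ m)) * Qc ^ (- m)
            * (s ^ (sgnb b * (et + 2 * j%:Z) * m) * qh s (2 * m)
               + eps * s ^ (- (sgnb b * 2 * (j%:Z - 1) * m)) * qhp s (et * m)))%:A,
        (* [E^{±j}_m, E^{±k}_n], j <> k *)
        j != k ->
        comm (E b j m) (E b k n) =
          (- eps * (sgnb (j < k)%N)%:~R * d
            * s ^ (- (sgnb b * (sgnb (j < k)%N * et + 2 * (k%:Z - j%:Z)) * m))
            * (qbr q (Qc ^ m) * qh s (et * m)
                / (m%:~R * (q - q^-1) * qh s (2 * m) ^+ 2 * qh s (2 * et * m)))
            * ((1 - p ^ m) / (1 - (p * Qc ^ (-2)) ^ m)) * Qc ^ (- m))%:A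
      & (* [E^{±j}_m, E^{∓k}_n], j <> k *)
        j != k ->
        comm (E b j m) (E (~~ b) k n) =
          (- eps * d * s ^ (sgnb b * (et + 2 * (j%:Z + k%:Z)) * m)
            * (qbr q (Qc ^ m) * qh s (et * m)
                / (m%:~R * (q - q^-1) * qh s (2 * m) ^+ 2 * qh s (2 * et * m)))
            * ((1 - p ^ m) / (1 - (p * Qc ^ (-2)) ^ m)) * Qc ^ (- m))%:A].
Proof.
move=> b j k m n hj hk hm hn eps et d E.
rewrite {}/eps {}/et {}/d {}/E.
subst q.
have q0 : s ^+ 2 != 0 by rewrite -normr_gt0.
have s0 : s != 0 by move: q0; rewrite expf_eq0.
have hs1 : `|s| < 1 by rewrite -(@expr_lt1 _ 2) // -normrX.
have hQ := hQ_of hs1.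
case: (eqVneq (m + n) 0) => hmn.
  have en : n = - m by lia.
  subst n.
  have H : forall i l, (1 <= i <= N)%N -> (1 <= l <= N)%N ->
     comm (alpha i m) (alpha l (- m)) = (qbr (s ^+ 2) ((s ^+ 2) ^ (bB N i l * m)) * ellF (s ^+ 2) p Qc m)%:A.
    by move=> i l hi hl; rewrite halpha // subrr eqxx.
  split.
  - rewrite (@comm_main _ _ N (s ^+ 2) s p Qc) //; congr (_ %:A); exact: fin1.
  - rewrite (@comm_main _ _ N (s ^+ 2) s p Qc) //; congr (_ %:A); exact: fin2.
  - move=> hjk; rewrite (@comm_main _ _ N (s ^+ 2) s p Qc) //; congr (_ %:A); exact: fin3.
  - move=> hjk; rewrite (@comm_main _ _ N (s ^+ 2) s p Qc) //; congr (_ %:A); exact: fin4.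
have H : forall i l, (1 <= i <= N)%N -> (1 <= l <= N)%N -> comm (alpha i m) (alpha l n) = 0%:A.
  move=> i l hi hl; rewrite halpha //; case: ifP => [/eqP e|_] //.
  by exfalso; apply: (negP hmn); apply/eqP; exact: e.

split; rewrite ?comm_zero //; try move=> hjk; rewrite ?comm_zero //;
  by rewrite !(mul0r, mulr0) scale0r.
Qed.
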